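(* There are absolute constants $c^*,\kappa>0$ such that for every $k\ge1$, every random variable $Y$ in $[0,1]^k$ with $Y_1\le\dots\le Y_k$ almost surely, and every $s>0$, $$D^{(q)}(r\,|\,Y,\|\cdot\|_\infty,s)\le\frac{\kappa}{k}e^{-r/k}\qquad\text{for all }r\ge c^*k.$$
   Context: $D^{(q)}(r\,|\,Y,\|\cdot\|_\infty,s)=\inf\{(\mathbb E\min_{a\in\mathcal C}\|Y-a\|_\infty^s)^{1/s}:\mathcal C\subset\mathbb R^k\text{ finite},\ \log\#\mathcal C\le r\}$ (natural log). *)

(* Defs.v *)
From HB Require Import structures.
From mathcomp Require Import all_boot all_order all_algebra.
From mathcomp Require Import finmap.
From mathcomp Require Import all_classical all_reals all_analysis.
Set Implicit Arguments. Unset Strict Implicit. Unset Printing Implicit Defensive.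
Import Order.TTheory GRing.Theory Num.Theory.
Local Open Scope ring_scope.
Local Open Scope fset_scope.

Definition supnorm {R : realType} {k : nat} (v : 'rV[R]_k) : R :=
  \big[Num.max/0]_(i < k) `| v ord0 i |.

(* min_{a in C} ||y - a||_oo, as an extended real (+oo for empty C) *)
Definition codebook_dist {R : realType} {k : nat} (C : {fset 'rV[R]_k})
  (y : 'rV[R]_k) : \bar R :=
  \big[mine/+oo%E]_(a <- C) (supnorm (y - a))%:E.

Definition quant_error {R : realType} {d} {T : measurableType d}
  (P : probability T R) {k : nat} (Y : T -> 'rV[R]_k) (s : R)
  (C : {fset 'rV[R]_k}) : \bar R :=
  poweR (\int[P]_x (poweR (codebook_dist C (Y x)) s))%E s^-1.

Definition quant_D {R : realType} {d} {T : measurableType d}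
  (P : probability T R) {k : nat} (Y : T -> 'rV[R]_k) (r s : R) : \bar R :=
  ereal_inf [set quant_error P Y s C | C in
     [set C : {fset 'rV[R]_k} | C != fset0 /\ ln (#|` C|%:R) <= r]].

(* Main.v *)
Require Import Defs.
From HB Require Import structures.
From mathcomp Require Import all_boot all_order all_algebra.
From mathcomp Require Import finmap.
From mathcomp Require Import all_classical all_reals all_analysis.
From mathcomp Require Import measurable_realfun.
From mathcomp Require Import zify ring.
Import Order.TTheory GRing.Theory Num.Theory.
Local Open Scope ring_scope.
Section M.
Context (R : realType) d (T : measurableType d).

Lemma meas_bigmax (I : Type) (s : seq I) (g : I -> T -> R) :
  (forall i, measurable_fun setT (g i)) ->
  measurable_fun setT (fun x => \big[Num.max/0]_(i <- s) g i x).
Proof.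
move=> mg; elim: s => [|i s IH].
  under eq_fun do rewrite big_nil. exact: measurable_cst.
under eq_fun do rewrite big_cons.
exact: (measurable_maxr (mg i) IH).
Qed.

Lemma meas_bigmine (I : Type) (s : seq I) (g : I -> T -> \bar R) :
  (forall i, measurable_fun setT (g i)) ->
  measurable_fun setT (fun x => \big[mine/+oo%E]_(i <- s) g i x).
Proof.
move=> mg; elim: s => [|i s IH].
  under eq_fun do rewrite big_nil. exact: measurable_cst.
under eq_fun do rewrite big_cons.
by apply: measurable_mine; [exact: mg|exact: IH].
Qed.

Lemma meas_cd k (C : {fset 'rV[R]_k}) (Y : T -> 'rV[R]_k) :
  (forall i : 'I_k, measurable_fun setT (fun x => Y x ord0 i)) ->
  measurable_fun setT (fun x => codebook_dist C (Y x)).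
Proof.
move=> mY; rewrite /codebook_dist; apply: meas_bigmine => a.
apply/measurable_EFinP; rewrite /supnorm; apply: meas_bigmax => i.
under eq_fun do rewrite !mxE.
apply: measurableT_comp => //; apply: measurable_funB => //.
Qed.
End M.
Section C.
Context (R : realType).
Local Open Scope ereal_scope.

Lemma bigmine_le_mem (I : eqType) (s : seq I) (F : I -> \bar R) a :
  a \in s -> \big[mine/+oo]_(b <- s) F b <= F a.
Proof.
elim: s => // b s IH; rewrite in_cons big_cons => /orP[/eqP ->|as_].
  by rewrite ge_min lexx.
by rewrite ge_min (IH as_) orbT.
Qed.

Lemma bigmine_ge0 (I : eqType) (s : seq I) (F : I -> \bar R) :
  (forall b, 0 <= F b) -> 0 <= \big[mine/+oo]_(b <- s) F b.
Proof.
move=> F0; elim: s => [|b s IH]; first by rewrite big_nil leey.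
by rewrite big_cons le_min F0 IH.
Qed.

Lemma supnorm_ge0 k (v : 'rV[R]_k) : (0 <= supnorm v)%R.
Proof.
rewrite /supnorm; elim: (index_enum _) => [|i s IH]; first by rewrite big_nil.
by rewrite big_cons le_max IH orbT.
Qed.

Lemma supnorm_le k (v : 'rV[R]_k) (e : R) : (0 <= e)%R ->
  (forall i, `|v ord0 i| <= e)%R -> (supnorm v <= e)%R.
Proof.
move=> e0 H; rewrite /supnorm; elim: (index_enum _) => [|i s IH]; first by rewrite big_nil.
by rewrite big_cons ge_max H IH.
Qed.

Lemma cd_ge0 k (C : {fset 'rV[R]_k}) y : 0 <= codebook_dist C y.
Proof. apply: bigmine_ge0 => b; rewrite lee_fin; exact: supnorm_ge0. Qed.

Lemma cd_le k (C : {fset 'rV[R]_k}) y a : a \in C ->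
  codebook_dist C y <= (supnorm (y - a))%:E.
Proof. exact: bigmine_le_mem. Qed.
End C.
Section Q.
Context (R : realType) d (T : measurableType d).
Local Open Scope ereal_scope.

Lemma poweR_le_fin (x : \bar R) (e r : R) : (0 <= r)%R -> (0 <= e)%R ->
  0 <= x -> x <= e%:E -> poweR x r <= (e `^ r)%:E.
Proof.
move=> r0 e0; case: x => [x| |] //; rewrite !lee_fin => x0 xe.
rewrite /=; apply: ge0_ler_powR => //; rewrite nnegrE //.
Qed.

Lemma qe_le (P : probability T R) k (Y : T -> 'rV[R]_k) (s e : R)
  (C : {fset 'rV[R]_k}) : (0 < s)%R -> (0 <= e)%R ->
  (forall i : 'I_k, measurable_fun setT (fun x => Y x ord0 i)) ->
  {ae P, forall x, codebook_dist C (Y x) <= e%:E} ->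
  quant_error P Y s C <= e%:E.
Proof.
move=> s0 e0 mY ae.
have Hint : \int[P]_x (poweR (codebook_dist C (Y x)) s) <= (e `^ s)%:E.
  apply: le_trans (_ : \int[P]_x (cst (e `^ s)%:E) x <= _).
    apply: ae_ge0_le_integral => //.
    - by move=> x _; exact: poweR_ge0.
    - exact: (measurableT_comp (@measurable_poweR R s) (@meas_cd R d T k C Y mY)).
    - by move=> x _; rewrite lee_fin powR_ge0.
    - apply: filterS ae => x h _; apply: poweR_le_fin => //; first exact: ltW.
      exact: cd_ge0.
  rewrite integral_cst // [X in _ * X](_ : _ = 1%E) ?mule1 //; exact: probability_setT.
have I0 : 0 <= \int[P]_x (poweR (codebook_dist C (Y x)) s).
  by apply: integral_ge0 => x _; exact: poweR_ge0.
rewrite /quant_error.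
have := @poweR_le_fin _ _ (s^-1) _ _ I0 Hint.
rewrite -powRrM mulfV ?gt_eqF // powRr1 //; apply.
- by rewrite invr_ge0 ltW.
- exact: powR_ge0.
Qed.
End Q.
Section Rd.
Context (R : realType).

Definition vec k M (t : k.-tuple 'I_M.+1) : 'rV[R]_k :=
  \row_i ((tnth t i)%:R / M%:R).

Arguments vec {k M}.
Lemma round_ok k M (y : 'rV[R]_k) : (0 < M)%N ->
  (forall i, 0 <= y ord0 i <= 1) ->
  (forall i j : 'I_k, (i <= j)%N -> y ord0 i <= y ord0 j) ->
  exists t : k.-tuple 'I_M.+1, sorted leq (map val t) /\
    forall i, `|(y - vec t) ord0 i| <= M%:R^-1.
Proof.
move=> M0 y01 ymon.
pose g (i : 'I_k) : 'I_M.+1 := inord (Num.truncn (y ord0 i * M%:R)).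
have gE i : val (g i) = Num.truncn (y ord0 i * M%:R).
  rewrite /g /= inordK // ltnS Num.Theory.truncn_le_nat; case/andP: (y01 i) => y0 y1.
  apply: (le_lt_trans (y := M%:R)); last by rewrite ltr_nat.
  by rewrite -[leRHS]mul1r ler_wpM2r // ler0n.
have Mp : (0 : R) < M%:R by rewrite ltr0n.
exists [tuple of map g (ord_tuple k)]; split.
  rewrite /= -map_comp sorted_map.
  apply: (@sub_sorted _ (relpre val leq)).
    move=> i j /= ij; rewrite !gE; apply: Num.Theory.le_truncn.
    by rewrite ler_pM2r // ymon.
  by rewrite -sorted_map val_enum_ord iota_sorted.
move=> i; rewrite !mxE tnth_map tnth_ord_tuple gE.
case/andP: (y01 i) => y0 _.
have := Num.Theory.truncn_itv (mulr_ge0 y0 (ltW Mp)).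
set n := Num.truncn _ => /andP[n1 n2].
rewrite ger0_norm; last first.
  by rewrite subr_ge0 ler_pdivrMr.
rewrite lerBlDr (_ : _ + _ = n.+1%:R / M%:R); last by rewrite -natr1 mulrDl mul1r addrC.
rewrite ler_pdivlMr //.
exact: ltW.
Qed.
End Rd.

Lemma ffact_le_exp n m : (n ^_ m <= n ^ m)%N.
Proof.
elim: m n => [|m IH] n; first by [].
rewrite ffactnS expnS leq_mul2l; apply/orP; right.
apply: leq_trans (IH _) _; case: {IH} m => [|m]; first by rewrite !expn0.
by rewrite leq_exp2r // leq_pred.
Qed.

Lemma fact_bound (R : realType) k : (1 <= k)%N ->
  (k%:R : R) ^+ k <= expR (k%:R) * k`!%:R.
Proof.
case: k => // n _.
have := @expR_ge1Dxn R n.+1%:R n (ler0n _ _).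
have f0 : (0 : R) < n.+1`!%:R by rewrite ltr0n fact_gt0.
rewrite -(ler_pM2r f0) mulrDl mul1r divfK ?gt_eqF //.
move=> h; apply: le_trans h; rewrite lerDr; exact: ler0n.
Qed.

Lemma binom_bound (R : realType) k N : (1 <= k)%N ->
  ('C(k + N * k, k)%:R : R) <= (expR 1 * N.+1%:R) ^+ k.
Proof.
move=> k1.
have f0 : (0 : R) < k`!%:R by rewrite ltr0n fact_gt0.
have kp : (0 : R) < (k%:R) ^+ k by rewrite exprn_gt0 // ltr0n.
rewrite -(ler_pM2r f0) -natrM bin_ffact.
apply: (@le_trans _ _ (((k + N * k) ^ k)%:R)); first by rewrite ler_nat ffact_le_exp.
have -> : (k + N * k = N.+1 * k)%N by rewrite mulSn.
rewrite natrX natrM exprMn exprMn -mulrA [X in _ <= X]mulrC -mulrA ler_wpM2l ?exprn_ge0 ?ler0n //.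

by rewrite -expRM_natl mulr1 mulrC; exact: fact_bound.
Qed.

Theorem lemma4 (R : realType) :
  exists (cstar kappa : R), 0 < cstar /\ 0 < kappa /\
  forall (k : nat), (1 <= k)%N ->
  forall (d : measure_display) (T : measurableType d) (P : probability T R)
    (Y : T -> 'rV[R]_k),
    (forall i : 'I_k, measurable_fun setT (fun x => Y x ord0 i)) ->
    {ae P, forall x, forall i : 'I_k, 0 <= Y x ord0 i <= 1} ->
    {ae P, forall x, forall i j : 'I_k, (i <= j)%N -> Y x ord0 i <= Y x ord0 j} ->
  forall s : R, 0 < s ->
  forall r : R, cstar * k%:R <= r ->
    (quant_D P Y r s <= (kappa / k%:R * expR (- (r / k%:R)))%:E)%E.
Proof.
exists 4, (2 * expR 1); split => //; split; first by rewrite mulr_gt0 ?expR_gt0.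
move=> k k1 d T P Y mY H01 Hmon s s0 r hr.
have kp : (0 : R) < k%:R by rewrite ltr0n.
set u := r / k%:R.
have u4 : 4 <= u by rewrite /u ler_pdivlMr.
set E := expR (u - 1).
have E4 : 4 <= E.
  apply: le_trans (expR_ge1Dx _); rewrite addrC subrK //.
have E0 : 0 <= E by apply: le_trans E4.
set n := Num.truncn E.
have n4 : (4 <= n)%N by rewrite Num.Theory.truncn_ge_nat.
have nE : n%:R <= E by rewrite Num.Theory.truncn_le.
have En : E < n.+1%:R by apply: Num.Theory.truncnS_gt.
set N := n.-1.
have nN : n = N.+1 by rewrite /N prednK // (leq_trans _ n4).
set M := (N * k)%N.
have M0 : (0 < M)%N by rewrite muln_gt0 k1 andbT /N -ltnS -nN (leq_trans _ n4).
pose S := [set t : k.-tuple 'I_M.+1 | sorted leq (map val t)].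
pose C : {fset 'rV[R]_k} := [fset x in map (@vec R k M) (enum S)]%fset.
have inC t : t \in S -> @vec R k M t \in C.
  by move=> tS; rewrite inE /= map_f // mem_enum.
have cardC : (#|`C| <= 'C(k + M, k))%N.
  rewrite card_fseq (leq_trans (size_undup _)) // size_map -cardE.
  by rewrite card_sorted_tuples.
have round (y : 'rV[R]_k) : (forall i, 0 <= y ord0 i <= 1) ->
    (forall i j : 'I_k, (i <= j)%N -> y ord0 i <= y ord0 j) ->
    exists2 a, a \in C & supnorm (y - a) <= M%:R^-1.
  move=> h1 h2; have [t [tS tb]] := round_ok R k M y M0 h1 h2.
  exists (vec R k M t); first by apply: inC; rewrite inE.
  by apply: supnorm_le => //; rewrite invr_ge0 ler0n.
have C0 : C != fset0.
  have [a aC _] : exists2 a, a \in C & supnorm (0 - a) <= M%:R^-1.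
    by apply: round => [i|i j _]; rewrite !mxE ?lexx ?ler01.
  by apply/fset0Pn; exists a.
have cardC1 : (0 < #|`C|)%N by rewrite cardfs_gt0.
have lnC : ln (#|`C|%:R) <= r.
  have eN : 0 < expR 1 * N.+1%:R :> R by rewrite mulr_gt0 ?expR_gt0 ?ltr0n.
  apply: (@le_trans _ _ (ln ((expR 1 * N.+1%:R) ^+ k))).
    rewrite ler_ln ?posrE ?ltr0n ?exprn_gt0 //.
    apply: le_trans (binom_bound R k N k1); rewrite ler_nat; exact: cardC.
  rewrite lnXn // lnM ?posrE ?expR_gt0 ?ltr0n // expRK.
  have lnN : ln (N.+1%:R : R) <= u - 1.
    rewrite -[u - 1]expRK -/E -nN ler_ln ?posrE ?ltr0n //; first by rewrite nN.
    by apply: lt_le_trans E4.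
  have -> : r = u *+ k by rewrite -mulr_natr /u divfK ?gt_eqF.
  by rewrite lerMn2r -lerBrDl lnN orbT.
apply: (@le_trans _ _ (quant_error P Y s C)).
  by rewrite /quant_D; apply: ereal_inf_lbound; exists C.
apply: (@le_trans _ _ (M%:R^-1)%:E).
  apply: qe_le => //.
  apply: filterS2 H01 Hmon => x h1 h2; have [a aC ha] := round _ h1 h2.
  by apply: le_trans (cd_le R k C (Y x) a aC) _; rewrite lee_fin.
rewrite lee_fin.
have N3 : (3 <= N)%N by rewrite -ltnS -nN.
have Np : 0 < N%:R :> R by rewrite ltr0n (leq_trans _ N3).
have key : expR u <= 2 * expR 1 * N%:R.
  have -> : expR u = expR 1 * E by rewrite /E -expRD addrC subrK.
  rewrite -mulrA [X in _ <= X]mulrC -mulrA ler_pM2l ?expR_gt0 //.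
  apply: (le_trans (ltW En)); rewrite nN -natrM ler_nat.
  lia.
rewrite natrM expRN invfM mulrC -!mulrA.
have -> : 2 * (expR 1 * (k%:R^-1 / expR u)) = k%:R^-1 * (2 * expR 1 / expR u).
  by rewrite /= ; ring.
rewrite ler_pM2l ?invr_gt0 // ler_pdivlMr ?expR_gt0 // mulrC ler_pdivrMr //.
Qed.
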